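(* Let $A,B\subseteq\Gamma$ be finite nonempty sets. Then there are $s\ge2^{-4}|A||B|^2\mathsf{E}(A,B)^{-1}$ pairwise disjoint sets $A_j\subseteq A+b_j$ with $|A_j|\ge|A|/2$ and $b_j\in B$, $j\in[s]$. Moreover, for any set $S\subseteq A+B$ put $\sigma=\sum_{x\in S}(A*B)(x)$ and suppose $\sigma\ge16|B|$. Then there are $s\ge2^{-8}\sigma^3|A|^{-2}|B|^{-1}\mathsf{E}(A,B)^{-1}$ pairwise disjoint sets $S_j\subseteq S\cap(A+b_j)$ with $|S_j|\ge2^{-3}\sigma|B|^{-1}$ and $b_j\in B$, $j\in[s]$.
   Context: $\Gamma$ is an abelian group. $(A*B)(x)=|\{(a,b)\in A\times B:a+b=x\}|$. $\mathsf{E}(A,B)=|\{(a_1,a_2,b_1,b_2)\in A^2\times B^2:a_1+b_1=a_2+b_2\}|$. *)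

(* Defs.v *)
From HB Require Import structures.
From mathcomp Require Import all_boot all_order all_algebra.
From mathcomp Require Import finmap.
Set Implicit Arguments. Unset Strict Implicit. Unset Printing Implicit Defensive.
Import Order.TTheory GRing.Theory Num.Theory.
Local Open Scope fset_scope.

Definition rconv (G : zmodType) (A B : {fset G}) (x : G) : nat :=
  #|` [fset p in A `*` B | (p.1 + p.2 == x)%R]|.

Definition energy (G : zmodType) (A B : {fset G}) : nat :=
  #|` [fset q in (A `*` A) `*` (B `*` B) |
        (q.1.1 + q.2.1 == q.1.2 + q.2.2)%R]|.

Definition sumset (G : zmodType) (A B : {fset G}) : {fset G} :=
  [fset (p.1 + p.2)%R | p in A `*` B].

Definition translate (G : zmodType) (A : {fset G}) (b : G) : {fset G} :=
  [fset (a + b)%R | a in A].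

(* Main.v *)
Require Import Defs.
From HB Require Import structures.
From mathcomp Require Import all_boot all_order all_algebra.
From mathcomp Require Import finmap.
From mathcomp Require Import zify ring lra.
Import Order.TTheory GRing.Theory Num.Theory.
Local Open Scope fset_scope.

Section Greedy.
Variables (T I : choiceType) (B : {fset I}) (F : I -> {fset T}) (k m : nat).
Hypothesis m_gt0 : (0 < m)%N.
Variable W : {fset T}.
Hypothesis FW : forall b, b \in B -> F b `<=` W.

Fixpoint unionL (L : seq ({fset T} * I)) : {fset T} :=
  match L with [::] => fset0 | p :: L' => p.1 `|` unionL L' end.

Fixpoint okL (L : seq ({fset T} * I)) : Prop :=
  match L with [::] => True
  | p :: L' => [/\ p.2 \in B, p.1 `<=` F p.2, (m <= k * #|` p.1|)%N,
                 [disjoint p.1 & unionL L'] & okL L'] end.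

Lemma greedy_step L b : okL L -> unionL L `<=` W -> b \in B ->
  (m <= k * #|` F b `\` unionL L|)%N ->
  exists p, [/\ okL (p :: L), unionL (p :: L) `<=` W &
       (#|` unionL L| < #|` unionL (p :: L)|)%N].
Proof.
move=> okl sub bB mD.
set D := F b `\` unionL L.
have dis : [disjoint D & unionL L].
  by apply/fdisjointP => x; rewrite !inE => /andP[].
have D0 : (0 < #|` D|)%N.
  rewrite lt0n; apply/eqP => h; move: mD; rewrite -/D h muln0.
  by rewrite leqn0 => /eqP h2; move: m_gt0; rewrite h2.
exists (D, b); split => // /=.
- by split => //; apply: fsubsetDl.
- rewrite fsubUset sub andbT /D. apply: (@fsubset_trans _ (F b)); [exact: fsubsetDl | exact: FW].
- have [_] := leq_card_fsetU D (unionL L); rewrite dis => /eqP ->; lia.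
Qed.

Lemma greedy_aux n L : okL L -> unionL L `<=` W -> (#|` W| - #|` unionL L| <= n)%N ->
  exists L', [/\ okL L', unionL L' `<=` W &
     forall b, b \in B -> (k * #|` F b `\` unionL L'| < m)%N].
Proof.
elim: n L => [|n IH] L okl sub hn;
  (have [st|/allPn [b bB nst]] := boolP (all (fun b => k * #|` F b `\` unionL L| < m)%N B);
  [by exists L; split => // b /(allP st) | ]);
  have [p [okp subp ltp]] := greedy_step L b okl sub bB ltac:(by rewrite leqNgt);
  have le2 := fsubset_leq_card subp.
  - by move: hn; lia.
  - by apply: (IH (p :: L)) => //; lia.
Qed.

Lemma greedy : exists L, [/\ okL L, unionL L `<=` W &
     forall b, b \in B -> (k * #|` F b `\` unionL L| < m)%N].
Proof. by apply: (@greedy_aux #|` W| [::]) => //=; rewrite subn0. Qed.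

Variable d : {fset T} * I.

Lemma okL_nth L j : okL L -> (j < size L)%N ->
  [/\ (nth d L j).2 \in B, (nth d L j).1 `<=` F (nth d L j).2 &
      (m <= k * #|` (nth d L j).1|)%N].
Proof.
elim: L j => [|p L IH] [|j] //= [h1 h2 h3 h4 h5] hj; first by [].
exact: IH.
Qed.

Lemma nth_unionL L j : (j < size L)%N -> (nth d L j).1 `<=` unionL L.
Proof.
elim: L j => [|p L IH] [|j] //= hj; first exact: fsubsetUl.
exact: fsubset_trans (IH _ hj) (fsubsetUr _ _).
Qed.

Lemma okL_disj L i j : okL L -> (i < j)%N -> (j < size L)%N ->
  [disjoint (nth d L i).1 & (nth d L j).1].
Proof.
elim: L i j => [|p L IH] [|i] [|j] //= [h1 h2 h3 h4 h5] hij hj.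
- exact: fdisjointWr (nth_unionL _ _ hj) h4.
- exact: IH.
Qed.

Lemma card_unionL L M : okL L -> (forall b, b \in B -> #|` F b| <= M)%N ->
  (#|` unionL L| <= size L * M)%N.
Proof.
move=> okl hM; elim: L okl => [|p L IH]; first by move=> _; rewrite [unionL _]/= cardfs0.
move=> [h1 h2 h3 h4 h5].
have := leq_card_fsetU p.1 (unionL L); move=> [le _].
change (#|` p.1 `|` unionL L| <= (size L).+1 * M)%N; rewrite mulSn.
have := fsubset_leq_card h2; have := hM _ h1; have := IH h5; lia.
Qed.
End Greedy.


Lemma card_sep (T : choiceType) (X : {fset T}) (P : pred T) :
  #|` [fset x in X | P x]| = (\sum_(x <- X) P x)%N.
Proof.
rewrite card_fset_sum1 big_fset /= big_mkcond /=.
by apply: eq_bigr => x _; case: (P x).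
Qed.

Lemma cardI_sum (T : choiceType) (X U : {fset T}) :
  #|` X `&` U| = (\sum_(x <- X) (x \in U))%N.
Proof.
rewrite -card_sep; congr (#|` _|); apply/fsetP => x; rewrite !inE.
by [].
Qed.

Lemma sumM (T1 T2 : choiceType) (X : {fset T1}) (Y : {fset T2}) (F : T1 * T2 -> nat) :
  (\sum_(p <- X `*` Y) F p = \sum_(x <- X) \sum_(y <- Y) F (x, y))%N.
Proof. by rewrite big_imfset2 /=; last by move=> [a b] [c d] _ _ [-> ->]. Qed.

Lemma sum_const_seq (T : Type) (s : seq T) (k : nat) :
  (\sum_(x <- s) k = size s * k)%N.
Proof. by elim: s => [|x s IH]; rewrite ?big_nil ?big_cons ?IH //= mulSn. Qed.

Lemma sum_eq_uniq (T : eqType) (s : seq T) (y : T) : uniq s ->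
  (\sum_(x <- s) (y == x) = (y \in s))%N.
Proof.
elim: s => [|x s IH]; rewrite ?big_nil ?big_cons // => /andP[xs us].
rewrite IH // in_cons; case: eqP => [->|]; last by rewrite add0n.
by rewrite (negbTE xs).
Qed.

Lemma CS (T : Type) (s : seq T) (c : T -> nat) :
  ((\sum_(x <- s) c x) ^ 2 <= size s * \sum_(x <- s) (c x) ^ 2)%N.
Proof.
elim: s => [|x s IH]; rewrite ?big_nil ?big_cons //=.
set S := (\sum_(x <- s) c x)%N in IH *; set Q := (\sum_(x <- s) c x ^ 2)%N in IH *.
set m := size s in IH *; set a := c x.
case: m IH => [|m] IH.
  have S0 : S = 0 by nia.
  rewrite S0; nia.
have h1 : (0 <= (m.+1 * a - S) ^ 2)%N by [].
nia.
Qed.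

Section Energy.
Variables (G : zmodType) (A B : {fset G}).
Local Open Scope ring_scope.

Definition cnt (x : G) : nat := (\sum_(p <- A `*` B) ((p.1 + p.2)%R == x))%N.
Definition NN (U : {fset G}) : nat := (\sum_(p <- A `*` B) ((p.1 + p.2)%R \in U))%N.

Lemma sum_cnt (U : {fset G}) : (\sum_(x <- U) cnt x)%N = NN U.
Proof.
rewrite /cnt exchange_big /NN; apply: eq_bigr => p _.
exact: sum_eq_uniq (fset_uniq U).
Qed.

Lemma rconv_cnt x : rconv A B x = cnt x.
Proof. by rewrite /rconv card_sep. Qed.

Lemma energy_sum : energy A B =
  (\sum_(p <- A `*` B) \sum_(q <- A `*` B) ((p.1 + p.2)%R == (q.1 + q.2)%R))%N.
Proof.
rewrite /energy card_sep sumM sumM [RHS]sumM; apply: eq_bigr => a1 _.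
under eq_bigr do rewrite sumM.
under [RHS]eq_bigr do rewrite sumM.
rewrite [RHS]exchange_big /=; apply: eq_bigr => a2 _; apply: eq_bigr => b1 _.
by apply: eq_bigr.
Qed.

Lemma sum_cnt2 (U : {fset G}) : (\sum_(x <- U) cnt x ^ 2 <= energy A B)%N.
Proof.
rewrite energy_sum.
have -> : (\sum_(x <- U) cnt x ^ 2 = \sum_(x <- U) \sum_(p <- A `*` B)
      \sum_(q <- A `*` B) (((p.1 + p.2)%R == x) * ((q.1 + q.2)%R == x)))%N.
  apply: eq_bigr => x _; rewrite /cnt expnS expn1 big_distrl /=.
  by apply: eq_bigr => p _; rewrite big_distrr.
rewrite exchange_big /=; apply: leq_sum => p _.
rewrite exchange_big /=; apply: leq_sum => q _.
have [e|ne] := eqVneq (p.1 + p.2) (q.1 + q.2).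
  rewrite e; under eq_bigr do rewrite mulnb andbb.
  by rewrite sum_eq_uniq ?fset_uniq // leq_b1.
rewrite big1_seq // => x _.
by case: eqP => [ex|] ; case: eqP => [ey|] //; move: ne; rewrite ex ey eqxx.
Qed.
End Energy.
Arguments NN {G}.
Arguments cnt {G}.

Section RatLemmas.
Local Open Scope ring_scope.

Lemma R1 (s a b e : nat) : (a * b ^ 2 <= 16 * s * e)%N ->
  2^-4 * (a%:R * b%:R ^+ 2) / e%:R <= s%:R :> rat.
Proof.
move=> h.
have [->|e0] := eqVneq e 0%N; first by rewrite invr0 mulr0.
move: h; set X := (a * b ^ 2)%N => h.
have h2 : X%:R <= (16 * s * e)%:R :> rat by rewrite ler_nat.
have D0 : 0 < e%:R :> rat by rewrite ltr0n lt0n.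
rewrite ler_pdivrMr; last exact: D0.
have -> : (2:rat)^-4 = 16^-1 by [].
rewrite natrM natrM in h2.
rewrite -natrX -natrM mulrC ler_pdivrMr; last by [].
apply: (le_trans h2); rewrite le_eqVlt; apply/orP; left; apply/eqP; ring.
Qed.

Lemma R2 (s sg a b e : nat) : (sg ^ 3 <= 256 * s * (a ^ 2 * b * e))%N ->
  2^-8 * sg%:R ^+ 3 / (a%:R ^+ 2 * b%:R * e%:R) <= s%:R :> rat.
Proof. Time idtac.
move=> h.
have -> : a%:R ^+ 2 * b%:R * e%:R = (a ^ 2 * b * e)%N%:R :> rat by rewrite -natrX -!natrM.
have -> : sg%:R ^+ 3 = (sg ^ 3)%N%:R :> rat by rewrite -natrX.
move: h; set D := (a ^ 2 * b * e)%N; set X := (sg ^ 3)%N => h.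
have [->|e0] := eqVneq D 0%N; first by rewrite invr0 mulr0.
have h2 : X%:R <= (256 * s * D)%:R :> rat by rewrite ler_nat.
have D0 : 0 < D%:R :> rat by rewrite ltr0n lt0n.
rewrite ler_pdivrMr; last exact: D0.
have -> : (2:rat)^-8 = 256^-1 by [].
rewrite natrM natrM in h2.
rewrite mulrC ler_pdivrMr; last by [].
apply: (le_trans h2); rewrite le_eqVlt; apply/orP; left; apply/eqP; ring.
Time Qed.

Lemma R3' (a n : nat) : (a <= 2 * n)%N -> a%:R / 2 <= n%:R :> rat.
Proof. Time idtac.
move=> h; rewrite ler_pdivrMr //.
have h2 : a%:R <= (2 * n)%:R :> rat by rewrite ler_nat.
by rewrite natrM mulrC in h2.
Time Qed.

Lemma R4' (sg b n : nat) : (sg <= 8 * b * n)%N -> (0 < b)%N ->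
  2^-3 * sg%:R / b%:R <= n%:R :> rat.
Proof.
move=> h b0.
have D0 : 0 < b%:R :> rat by rewrite ltr0n.
rewrite ler_pdivrMr; last exact: D0.
have -> : (2:rat)^-3 = 8^-1 by [].
have h2 : sg%:R <= (8 * b * n)%:R :> rat by rewrite ler_nat.
rewrite mulrC ler_pdivrMr; last by [].
rewrite natrM natrM in h2.
apply: (le_trans h2); rewrite le_eqVlt; apply/orP; left; apply/eqP; ring.
Qed.

End RatLemmas.

Section Trans.
Local Open Scope ring_scope.

Lemma card_translate (G : zmodType) (A : {fset G}) b : #|` translate A b| = #|` A|.
Proof. by rewrite /translate card_imfset //; apply: addIr. Qed.

Lemma mem_translate (G : zmodType) (A : {fset G}) b a : a \in A -> a + b \in translate A b.
Proof. by move=> aA; rewrite /translate; apply: in_imfset. Qed.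

Lemma translate_sub (G : zmodType) (A B : {fset G}) b : b \in B -> translate A b `<=` sumset A B.
Proof.
move=> bB; apply/fsubsetP => x /imfsetP [a /= aA ->].
by rewrite /sumset; apply: (in_imfset _ (fun p : G * G => p.1 + p.2) (x := (a, b))); rewrite inE /= aA bB.
Qed.

End Trans.

Lemma transI_sum (G : zmodType) (A U : {fset G}) b :
  #|` translate A b `&` U| = (\sum_(a <- A) ((a + b)%R \in U))%N.
Proof.
rewrite cardI_sum /translate big_imfset //=; last by move=> x y _ _; apply: addIr.
Qed.

Lemma sumB_trans (G : zmodType) (A B U : {fset G}) :
  (\sum_(b <- B) #|` translate A b `&` U|)%N = NN A B U.
Proof.
under eq_bigr do rewrite transI_sum.
by rewrite exchange_big /NN sumM.
Qed.

Lemma NN_le (G : zmodType) (A B U : {fset G}) : (NN A B U <= #|` A| * #|` B|)%N.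
Proof.
rewrite /NN sumM card_fset_sum1 big_distrl /=; apply: leq_sum => a _.
rewrite card_fset_sum1 mul1n; apply: leq_sum => b _; exact: leq_b1.
Qed.

Lemma NN_sq (G : zmodType) (A B U : {fset G}) : (NN A B U ^ 2 <= #|` U| * energy A B)%N.
Proof.
rewrite -sum_cnt; apply: leq_trans (CS _ _ _) _.
by rewrite leq_mul2l sum_cnt2 orbT.
Qed.


Lemma sum_le_seq (T : eqType) (s : seq T) (F1 F2 : T -> nat) :
  (forall x, x \in s -> F1 x <= F2 x)%N -> (\sum_(x <- s) F1 x <= \sum_(x <- s) F2 x)%N.
Proof. by move=> h; rewrite big_seq [X in (_ <= X)%N]big_seq; apply: leq_sum. Qed.

Lemma disj_nth (T I : choiceType) (B : {fset I}) (F : I -> {fset T}) (k m : nat)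
  (d : {fset T} * I) (L : seq ({fset T} * I)) (s := size L) :
  okL T I B F k m L -> forall i j : 'I_s, i != j ->
  [disjoint (nth d L i).1 & (nth d L j).1].
Proof.
move=> okl i j; rewrite -val_eqE /= neq_ltn => /orP[h|h].
  exact: okL_disj _ _ _ _ _ _ d L i j okl h (ltn_ord j).
rewrite fdisjoint_sym; exact: okL_disj _ _ _ _ _ _ d L j i okl h (ltn_ord i).
Qed.

Lemma part1 (G : zmodType) (A B : {fset G}) :
  A != fset0 -> B != fset0 ->
  (exists (s : nat) (Aj : 'I_s -> {fset G}) (b : 'I_s -> G),
      [/\ (s%:R : rat) >= 2^-4 * (#|` A|%:R * #|` B|%:R ^+ 2) / (energy A B)%:R,
          (forall j, b j \in B),
          (forall j, Aj j `<=` translate A (b j)),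
          (forall j, (#|` Aj j|%:R : rat) >= #|` A|%:R / 2) &
          (forall i j, i != j -> [disjoint Aj i & Aj j])])%R.
Proof.
move=> An Bn.
have A0 : (0 < #|` A|)%N by rewrite cardfs_gt0.
have B0 : (0 < #|` B|)%N by rewrite cardfs_gt0.
have [L [okl subW stuck]] := greedy G G B (translate A) 2 #|` A| A0 (sumset A B)
   (fun b bB => @translate_sub G A B b bB).
set U := unionL G G L in stuck.
pose d := (fset0, 0%R) : {fset G} * G.
have hU : (#|` U| <= size L * #|` A|)%N.
  by apply: (card_unionL _ _ _ _ _ _ A0 L _ okl) => b _; rewrite card_translate.
have hN := NN_sq _ A B U.
have hsum : (#|` B| * (#|` A| + 1) <= 2 * NN A B U)%N.
  rewrite -sumB_trans big_distrr /= -sum_const_seq; apply: sum_le_seq => b bB.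
  have := stuck b bB; have := cardfsID U (translate A b); rewrite card_translate.
  set x := #|` _ `&` U|; set y := #|` _ `\` U|; move=> h1 h2; set a := #|` A| in h1 h2 *; lia.
have key : (#|` A| * #|` B| ^ 2 <= 16 * size L * energy A B)%N.
  set E := energy A B in hN *; set N := NN A B U in hN hsum *.
  set a := #|` A| in hU hsum A0 *; set b := #|` B| in hsum *; set s := size L in hU *.
  have h1 : (a * (b ^ 2 * a) <= a * (4 * s * E))%N.
    have : ((b * (a + 1)) ^ 2 <= (2 * N) ^ 2)%N by rewrite leq_exp2r.
    have : (N ^ 2 <= s * a * E)%N by apply: leq_trans hN _; rewrite leq_mul2r hU orbT.
    nia.
  rewrite leq_mul2l in h1; case/orP: h1 => [/eqP a0|h1]; first by lia.
  nia.
exists (size L), (fun j => (nth d L j).1), (fun j => (nth d L j).2); split.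
- exact: R1.
- by move=> j; have [] := okL_nth _ _ _ _ _ _ d L j okl (ltn_ord j).
- by move=> j; have [] := okL_nth _ _ _ _ _ _ d L j okl (ltn_ord j).
- move=> j; have [_ _ h] := okL_nth _ _ _ _ _ _ d L j okl (ltn_ord j).
  exact: R3'.
- exact: disj_nth okl.
Qed.


Lemma part2 (G : zmodType) (A B : {fset G}) :
  A != fset0 -> B != fset0 ->
  (forall S : {fset G}, S `<=` sumset A B ->
     let sigma : rat := (\sum_(x <- S) rconv A B x)%N%:R in
     sigma >= 16 * #|` B|%:R ->
     exists (s : nat) (Sj : 'I_s -> {fset G}) (b : 'I_s -> G),
      [/\ (s%:R : rat) >= 2^-8 * sigma ^+ 3 / (#|` A|%:R ^+ 2 * #|` B|%:R * (energy A B)%:R),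
          (forall j, b j \in B),
          (forall j, Sj j `<=` S `&` translate A (b j)),
          (forall j, (#|` Sj j|%:R : rat) >= 2^-3 * sigma / #|` B|%:R) &
          (forall i j, i != j -> [disjoint Sj i & Sj j])])%R.
Proof.
move=> An Bn S sS sigma hs.
have A0 : (0 < #|` A|)%N by rewrite cardfs_gt0.
have B0 : (0 < #|` B|)%N by rewrite cardfs_gt0.
rewrite /sigma in hs *.
set sg := (\sum_(x <- S) rconv A B x)%N in hs *.
have sgN : sg = NN A B S.
  by rewrite /sg; under eq_bigr do rewrite rconv_cnt; exact: sum_cnt.
have sg0 : (0 < sg)%N.
  have : ((16 * #|` B|)%N%:R <= sg%:R :> rat)%R by rewrite natrM.
  rewrite ler_nat; lia.
have [L [okl subW stuck]] := greedy G G B (fun b => S `&` translate A b) (8 * #|` B|) sg sg0 S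
   (fun b _ => fsubsetIl S (translate A b)).
set U := unionL G G L in stuck subW.
pose d := (fset0, 0%R) : {fset G} * G.
have hU : (#|` U| <= size L * #|` A|)%N.
  apply: (card_unionL _ _ _ _ _ _ sg0 L _ okl) => b _.
  by rewrite -(card_translate _ A b); apply: fsubset_leq_card; apply: fsubsetIr.
have hN := NN_sq _ A B U.
have hle : (sg <= #|` A| * #|` B|)%N by rewrite sgN; apply: NN_le.
have hsum : (8 * #|` B| * sg + #|` B| <= #|` B| * sg + 8 * #|` B| * NN A B U)%N.
  have e1 : (8 * #|` B| * sg + #|` B| = \sum_(b <- B) (8 * #|` B| * #|` S `&` translate A b| + 1))%N.
    rewrite big_split /= -big_distrr /= sum_const_seq muln1; congr (_ * _ + _)%N.
    rewrite sgN -sumB_trans; apply: eq_bigr => b _; by rewrite fsetIC.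
  have e2 : (#|` B| * sg + 8 * #|` B| * NN A B U =
      \sum_(b <- B) (sg + 8 * #|` B| * #|` translate A b `&` U|))%N.
    by rewrite big_split /= -big_distrr /= sum_const_seq sumB_trans.
  rewrite e1 e2; apply: sum_le_seq => b bB.
  have := stuck b bB; have := cardfsID U (S `&` translate A b).
  have -> : S `&` translate A b `&` U = translate A b `&` U.
    apply/fsetP => x; rewrite !inE; case xU: (x \in U); rewrite ?andbF ?andbT //.
    by rewrite (fsubsetP subW x xU).
  set x := #|` _ `&` U|; set y := #|` _ `\` U|; set z := #|` S `&` _|; move=> h1 h2.
  set bb := #|` B| in h2 *; nia.
have key : (sg ^ 3 <= 256 * size L * (#|` A| ^ 2 * #|` B| * energy A B))%N.
  set E := energy A B in hN *; set N := NN A B U in hN hsum *.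
  set a := #|` A| in hU hle A0 *; set b := #|` B| in hsum hle B0 *; set s := size L in hU *.
  have h78 : (7 * sg < 8 * N)%N.
    have : (b * (7 * sg + 1) <= b * (8 * N))%N by nia.
    by rewrite leq_mul2l; case/orP => [/eqP b0|]; [lia | lia].
  have h1 : (49 * sg ^ 2 <= 64 * (s * a * E))%N.
    have : (N ^ 2 <= s * a * E)%N by apply: leq_trans hN _; rewrite leq_mul2r hU orbT.
    nia.
  have h2 : (sg ^ 3 <= a * b * sg ^ 2)%N by nia.
  nia.
exists (size L), (fun j => (nth d L j).1), (fun j => (nth d L j).2); split.
- exact: R2.
- by move=> j; have [] := okL_nth _ _ _ _ _ _ d L j okl (ltn_ord j).
- by move=> j; have [] := okL_nth _ _ _ _ _ _ d L j okl (ltn_ord j).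
- move=> j; have [_ _ h] := okL_nth _ _ _ _ _ _ d L j okl (ltn_ord j).
  exact: R4'.
- exact: disj_nth okl.
Qed.

Local Open Scope ring_scope.

Theorem lemma9 (G : zmodType) (A B : {fset G}) :
  A != fset0 -> B != fset0 ->
  (exists (s : nat) (Aj : 'I_s -> {fset G}) (b : 'I_s -> G),
      [/\ (s%:R : rat) >= 2^-4 * (#|` A|%:R * #|` B|%:R ^+ 2) / (energy A B)%:R,
          (forall j, b j \in B),
          (forall j, Aj j `<=` translate A (b j)),
          (forall j, (#|` Aj j|%:R : rat) >= #|` A|%:R / 2) &
          (forall i j, i != j -> [disjoint Aj i & Aj j])])
  /\
  (forall S : {fset G}, S `<=` sumset A B ->
     let sigma : rat := (\sum_(x <- S) rconv A B x)%N%:R in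
     sigma >= 16 * #|` B|%:R ->
     exists (s : nat) (Sj : 'I_s -> {fset G}) (b : 'I_s -> G),
      [/\ (s%:R : rat) >= 2^-8 * sigma ^+ 3 / (#|` A|%:R ^+ 2 * #|` B|%:R * (energy A B)%:R),
          (forall j, b j \in B),
          (forall j, Sj j `<=` S `&` translate A (b j)),
          (forall j, (#|` Sj j|%:R : rat) >= 2^-3 * sigma / #|` B|%:R) &
          (forall i j, i != j -> [disjoint Sj i & Sj j])]).
Proof.
move=> An Bn; split; [exact: part1 | exact: part2].
Qed.
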